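(* Let $X$ be a nonvanishing correlator of type $X_{-1}$, let $W_j$ be an atomic summand of $W$, and let $S$ be a set of loop indices in $W_j$ obeying the NP-rule. Then $K_S:=\sum_{i\in S}K_i\ge0$. Moreover: if $K_S=0$, then the sequence $(K_i)_{i\in S}$ is a concatenation of blocks $(0)$ and $(-1,1)$; if $K_S=1$, then $(K_i)_{i\in S}$ is a concatenation of blocks $(0)$ and $(-1,1)$ together with exactly one block $(1)$, $(-1,2)$ or $(-2,3)$, and if $(K_i,K_{i+1})=(-2,3)$ is that block then $a_i=2$.
   Context: $W=\bigoplus_jW_j$ is an invertible polynomial, disjoint sum of atomic summands: Fermat $x^a$, chain $x_1^{a_1}x_2+\dots+x_{N-1}^{a_{N-1}}x_N+x_N^{a_N}$, loop $x_1^{a_1}x_2+\dots+x_N^{a_N}x_1$ (variables relabeled within each summand; indices of a loop are taken mod its length). A genus-zero correlator (B-model of $W^T$, or A-model of $(W,G_W)$ via Krawitz's map) is of type $X_{-1}$ if it has at least four insertions, has the form $\langle x_N,\dots,x_N,\dots,x_1,\dots,x_1,\alpha,\beta\rangle$ with $x_i$ appearing $\ell_i\ge0$ times and $\alpha=\prod x_i^{m_i}$, $\beta=\prod x_i^{n_i}$ monomials of the standard basis of $\mathrm{Jac}(W^T)$ (in particular $m_i+n_i\le2a_i-2$ for chain and loop variables), and, with $b=E_W^{-1}(\ell+m+n+2\cdot\mathbf 1)$ and $K_i=\ell_i-b_i+1$, satisfies $K_i\in\mathbb Z$ and $\sum_iK_i=1$. An index $i$ (in a chain or loop summand) is a loop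 index if $a_ib_i+b_{i+1}=\ell_i+m_i+n_i+2$; all indices of a loop and all indices $i<N$ of a chain are loop indices. A set $S$ of loop indices obeys the NP-rule if for every $i\in S$ with $K_i<0$ also $i+1\in S$. The standard basis of $\mathrm{Jac}(W^T)$: $x^r$, $r\le a-2$ (Fermat); for chain transpose $x_1^{a_1}+x_1x_2^{a_2}+\dots+x_{N-1}x_N^{a_N}$, $\prod x_i^{r_i}$ with $r_i\le a_i-1$ excluding $r_N=a_N-1,r_{N-1}=0,\dots,r_{N-2l}=a_{N-2l}-1,r_{N-2l-1}\ge1$; for loop transpose, all $\prod x_i^{r_i}$, $r_i<a_i$; products across summands. *)

(* Defs.v *)
From mathcomp Require Import all_boot all_order all_algebra.
Set Implicit Arguments. Unset Strict Implicit. Unset Printing Implicit Defensive.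
Import Order.TTheory GRing.Theory Num.Theory.

(* Atomic summands of an invertible polynomial W.  Variables of a summand are
   indexed 0-based: index i here is x_(i+1) of the paper.
   - Fermat a        :  x^a
   - Chain [a_1..a_N]:  x_1^a_1 x_2 + ... + x_(N-1)^a_(N-1) x_N + x_N^a_N
   - Loop  [a_1..a_N]:  x_1^a_1 x_2 + ... + x_N^a_N x_1                    *)
Inductive atom := Fermat of nat | Chain of seq nat | Loop of seq nat.

Definition atom_default : atom := Fermat 2.

Definition alen (A : atom) : nat :=
  match A with Fermat _ => 1 | Chain s => size s | Loop s => size s end.

Definition expo (A : atom) (i : nat) : nat :=
  match A with Fermat a => a | Chain s => nth 0 s i | Loop s => nth 0 s i end.

Definition wf_atom (A : atom) : Prop :=
  match A with
  | Fermat a => 2 <= a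
  | Chain s => 1 <= size s /\ all (fun a => 2 <= a) s
  | Loop s => 2 <= size s /\ all (fun a => 2 <= a) s
  end.

Definition asucc (A : atom) (i : nat) : nat :=
  match A with Loop s => i.+1 %% size s | _ => i.+1 end.

(* the term b_(i+1) occurring in row i of E_W b (0 if there is no x_(i+1)
   in the i-th monomial, i.e. Fermat, or last index of a chain) *)
Definition nextb (A : atom) (bj : nat -> rat) (i : nat) : rat :=
  match A with
  | Fermat _ => 0%R
  | Chain s => if i.+1 < size s then bj i.+1 else 0%R
  | Loop s => bj (i.+1 %% size s)
  end.

Definition EWrow (A : atom) (bj : nat -> rat) (i : nat) : rat :=
  ((expo A i)%:R * bj i + nextb A bj i)%R.

Definition is_chain_or_loop (A : atom) : bool :=
  match A with Fermat _ => false | _ => true end.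

Definition loop_index (A : atom) (bj : nat -> rat) (vj : nat -> nat) (i : nat) : Prop :=
  is_chain_or_loop A /\ i < alen A /\ EWrow A bj i = ((vj i)%:R)%R.

(* excluded exponent pattern in the basis of Jac of a chain transpose
   x_1^a_1 + x_1 x_2^a_2 + ... + x_(N-1) x_N^a_N :
   r_N = a_N - 1, r_(N-1) = 0, ..., r_(N-2l) = a_(N-2l) - 1, r_(N-2l-1) >= 1
   (the last condition being vacuous when N - 2l - 1 = 0); 0-based here. *)
Definition chain_excluded (s : seq nat) (r : nat -> nat) : Prop :=
  let N := size s in
  exists l : nat,
    2 * l + 1 <= N /\
    (forall k, k <= l -> r (N - 1 - 2 * k) = nth 0 s (N - 1 - 2 * k) - 1) /\
    (forall k, k < l -> r (N - 2 - 2 * k) = 0) /\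
    (2 * l + 1 = N \/ 1 <= r (N - 2 - 2 * l)).

(* the monomial prod_i x_i^(r i) (restricted to the summand) belongs to the
   standard basis of Jac(A^T) *)
Definition std_basis (A : atom) (r : nat -> nat) : Prop :=
  match A with
  | Fermat a => r 0 <= a - 2
  | Chain s => (forall i, i < size s -> r i <= nth 0 s i - 1) /\ ~ chain_excluded s r
  | Loop s => forall i, i < size s -> r i < nth 0 s i
  end.

(* A genus-zero correlator <x_N..x_N, ..., x_1..x_1, alpha, beta> of type X_{-1}
   for W = (+)_j W_j (W = list of atoms).  l j i = multiplicity of the variable
   x_i of W_j, m, n = exponents of alpha, beta; b = E_W^{-1}(l+m+n+2),
   given through its defining linear system; K j i = l_i - b_i + 1 (integers). *)
Definition vvec (l m n : nat -> nat -> nat) (j i : nat) : nat :=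
  l j i + m j i + n j i + 2.

Definition type_Xm1 (W : seq atom) (l m n : nat -> nat -> nat)
    (b : nat -> nat -> rat) (K : nat -> nat -> int) : Prop :=
  (* at least four insertions *)
      4 <= (\sum_(j < size W) \sum_(i < alen (nth atom_default W j)) l j i) + 2 /\
      (forall j, j < size W -> std_basis (nth atom_default W j) (m j)) /\
      (forall j, j < size W -> std_basis (nth atom_default W j) (n j)) /\
      (forall j i, j < size W -> i < alen (nth atom_default W j) ->
         EWrow (nth atom_default W j) (b j) i = ((vvec l m n j i)%:R)%R) /\
      (forall j i, j < size W -> i < alen (nth atom_default W j) ->
         ((K j i)%:~R = (l j i)%:R - b j i + 1 :> rat)%R) /\
      (\sum_(j < size W) \sum_(i < alen (nth atom_default W j)) K j i = 1)%R.

Definition NP_rule (A : atom) (Kj : nat -> int) (S : seq nat) : Prop :=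
  forall i, i \in S -> (Kj i < 0)%R -> asucc A i \in S.

Definition zero_block (A : atom) (Kj : nat -> int) (B : seq nat) : Prop :=
  exists i, (B = [:: i] /\ Kj i = 0%R) \/
            (B = [:: i; asucc A i] /\ Kj i = (-1)%R /\ Kj (asucc A i) = 1%R).

Definition one_block (A : atom) (Kj : nat -> int) (B : seq nat) : Prop :=
  exists i, (B = [:: i] /\ Kj i = 1%R) \/
            (B = [:: i; asucc A i] /\ Kj i = (-1)%R /\ Kj (asucc A i) = 2%R) \/
            (B = [:: i; asucc A i] /\ Kj i = (-2)%R /\ Kj (asucc A i) = 3%R /\
             expo A i = 2).

(* Main.v *)
Require Import Defs.
From mathcomp Require Import all_boot all_order all_algebra.
Import Order.TTheory GRing.Theory Num.Theory.
From mathcomp Require Import zify ring lra.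
Set Implicit Arguments. Unset Strict Implicit.

Definition blockok (k : nat -> int) (f : nat -> nat) (Q : nat -> Prop) (B : seq nat) :=
  (exists i, B = [:: i] /\ (0 <= k i)%R) \/ (exists i, B = [:: i; f i] /\ (k i < 0)%R /\ Q i).

Lemma decomp (k : nat -> int) (f : nat -> nat) (Q : nat -> Prop) (S : seq nat) :
  uniq S ->
  (forall i, i \in S -> (k i < 0)%R -> [/\ f i \in S, Q i & (0 < k (f i))%R]) ->
  (forall i i', i \in S -> i' \in S -> (k i < 0)%R -> (k i' < 0)%R -> f i = f i' -> i = i') ->
  exists Bs : seq (seq nat), perm_eq (flatten Bs) S /\
    forall B, B \in Bs -> blockok k f Q B.
Proof.
have [n] := ubnP (size S); elim: n S => // n IH S /ltnSE Hs uS H Hinj.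
case: (boolP (has (fun i => k i < 0)%R S)).
- case/hasP => x xS xneg.
  have [fxS Qx kfx] := H x xS xneg.
  have xfx : x != f x by apply/eqP => e; move: kfx; rewrite -e; lia.
  set S' := [seq y <- S | (y != x) && (y != f x)].
  have uS' : uniq (x :: f x :: S').
    rewrite /= /S' !mem_filter !eqxx /= andbF inE negb_or xfx /= mem_filter eqxx /=.
    by rewrite filter_uniq.
  have pS : perm_eq (x :: f x :: S') S.
    apply: uniq_perm => //= y; rewrite !inE mem_filter.
    by case: (eqVneq y x) => [->|] //=; case: (eqVneq y (f x)) => [->|] //=.
  have sz : size S' < n by move: (perm_size pS) => /= e; lia.
  have [|||Bs [pB hB]] := IH S' sz.
  + by move: uS' => /= /andP[_ /andP[]].
  + move=> i; rewrite mem_filter => /andP[/andP[ix ifx] iS] ineg.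
    have [fiS Qi kfi] := H i iS ineg.
    split => //; rewrite mem_filter fiS andbT; apply/andP; split.
    * by apply/eqP => e; move: kfi; rewrite e; lia.
    * by apply/eqP => e; move: ix; rewrite (Hinj i x) ?eqxx.
  + move=> i i'; rewrite !mem_filter => /andP[_ iS] /andP[_ i'S]; exact: Hinj.
  exists ([:: x; f x] :: Bs); split.
  + by apply: perm_trans pS; rewrite /= !perm_cons.
  + move=> B; rewrite inE => /orP[/eqP ->|]; last exact: hB.
    by right; exists x.
- move=> hn; exists [seq [:: i] | i <- S]; rewrite flatten_seq1; split => // B.
  case/mapP => i iS ->; left; exists i; split => //.
  by move/hasPn: hn => /(_ i iS); rewrite -leNgt.
Qed.

Definition Qd (k : nat -> int) (f : nat -> nat) (a : nat -> nat) (i : nat) : Prop :=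
  2 <= a i /\ (((a i)%:Z - 1) * (- k i - 1) <= k i + k (f i))%R.

Lemma blk_ge0 k f a B : blockok k f (Qd k f a) B -> (0 <= \sum_(i <- B) k i)%R.
Proof.
case=> [[i [-> h]]|[i [-> [h [h1 h2]]]]]; rewrite !big_cons big_nil ?addr0 //.
have : (1 <= (a i)%:Z)%R by lia.
nia.
Qed.

Lemma blk0 k A B : blockok k (asucc A) (Qd k (asucc A) (expo A)) B ->
  (\sum_(i <- B) k i = 0)%R -> zero_block A k B.
Proof.
case=> [[i [-> h]]|[i [-> [h [h1 h2]]]]]; rewrite !big_cons big_nil ?addr0 => e.
  by exists i; left.
exists i; right; split => //.
have : (1 <= (expo A i)%:Z)%R by lia.
nia.
Qed.

Lemma blk1 k A B : blockok k (asucc A) (Qd k (asucc A) (expo A)) B ->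
  (\sum_(i <- B) k i = 1)%R -> one_block A k B.
Proof.
case=> [[i [-> h]]|[i [-> [h [h1 h2]]]]]; rewrite !big_cons big_nil ?addr0 => e.
  by exists i; left.
exists i; right.
have : (1 <= (expo A i)%:Z)%R by lia.
move=> h3.
move: h2 h3 e; set x := k i; set y := k (asucc A i); set c := Posz (expo A i) => h2 h3 e.
have h4 : (2 <= c)%R by rewrite /c; lia.
have hx : (x < 0)%R by [].
clearbody x y.
have hb : (- x - 1 <= 1)%R by nia.
have : (x = -1 /\ y = 2)%R \/ (x = -2 /\ y = 3 /\ c = 2)%R.
  have [ex|ex] : (x = -1 \/ x = -2)%R by lia.
    by left; subst x; lia.
  right; subst x; rewrite opprK in h2; have : (c - 1 <= 1)%R by lia. lia.
case=> [[? ?]|[? [? hc]]]; [left|right]; split => //; split => //; split => //; lia.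
Qed.

Lemma sum_ge0s (Bs : seq (seq nat)) (F : seq nat -> int) :
  (forall B, B \in Bs -> 0 <= F B)%R -> (0 <= \sum_(B <- Bs) F B)%R.
Proof. by move=> h; rewrite big_seq; apply: sumr_ge0. Qed.

Lemma sum0s (Bs : seq (seq nat)) (F : seq nat -> int) :
  (forall B, B \in Bs -> 0 <= F B)%R -> (\sum_(B <- Bs) F B = 0)%R ->
  forall B, B \in Bs -> F B = 0%R.
Proof.
elim: Bs => // B0 Bs IH h; rewrite big_cons => e B.
have h0 := h B0 (mem_head _ _).
have h1 : (0 <= \sum_(B <- Bs) F B)%R by apply: sum_ge0s => B' hB'; apply: h; rewrite inE hB' orbT.
move: e h1; set s := (\sum_(_ <- _) _)%R => e h1.
rewrite inE => /orP[/eqP ->|hB]; first lia.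
apply: IH hB => //; [move=> B' hB'; by apply: h; rewrite inE hB' orbT|rewrite -/s; lia].
Qed.

Lemma sum1s (Bs : seq (seq nat)) (F : seq nat -> int) :
  (forall B, B \in Bs -> 0 <= F B)%R -> (\sum_(B <- Bs) F B = 1)%R ->
  exists Bs1 B0 Bs2, Bs = Bs1 ++ B0 :: Bs2 /\ F B0 = 1%R /\
    forall B, B \in Bs1 ++ Bs2 -> F B = 0%R.
Proof.
elim: Bs => [|B0 Bs IH] h; rewrite ?big_nil ?big_cons => e //.
have h0 := h B0 (mem_head _ _).
have hs : forall B, B \in Bs -> (0 <= F B)%R by move=> B' hB'; apply: h; rewrite inE hB' orbT.
have h1 : (0 <= \sum_(B <- Bs) F B)%R by apply: sum_ge0s.
have [[e1 e2]|[e1 e2]] : (F B0 = 0 /\ \sum_(B <- Bs) F B = 1)%R \/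
   (F B0 = 1 /\ \sum_(B <- Bs) F B = 0)%R.
  by move: e h1; set s := (\sum_(_ <- _) _)%R => e h1; lia.
- have [Bs1 [B1 [Bs2 [-> [f1 f2]]]]] := IH hs e2.
  exists (B0 :: Bs1), B1, Bs2; split => //; split => // B.
  by rewrite cat_cons inE => /orP[/eqP ->|]; [|apply: f2].
- exists [::], B0, Bs; split => //; split => //; exact: sum0s.
Qed.

Module Ar.
Local Open Scope ring_scope.
Lemma arith (a li lf mi ni : nat) (ki kf : int) (bi bf : rat) : (2 <= a)%N -> (mi + ni + 2 <= 2*a)%N ->
  a%:R * bi + bf = (li + mi + ni + 2)%:R -> ki%:~R = li%:R - bi + 1 -> kf%:~R = lf%:R - bf + 1 ->
  ((a%:Z - 1) * (-ki - 1) <= ki + kf)%R.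
Proof.
move=> ha hmn E Ki Kf.
rewrite -(ler_int rat) !(rmorphM, rmorphD, rmorphB, rmorphN, rmorph1) /=.
have ha' : (2 <= a%:R :> rat) by rewrite (ler_nat rat 2).
have hmn' : (mi%:R + ni%:R + 2 <= 2 * a%:R :> rat).
  move: hmn; rewrite -(ler_nat rat) !natrD; lra.
have hl : (0 <= li%:R :> rat) by [].
have hf : (0 <= lf%:R :> rat) by [].
rewrite !natrD in E.
rewrite Ki Kf.
have -> : (a%:Z)%:~R = a%:R :> rat by [].
nra.
Qed.
End Ar.

Lemma modS i N : i < N -> i.+1 %% N = if i.+1 == N then 0 else i.+1.
Proof. move=> h; case: eqP => [->|ne]; first by rewrite modnn. rewrite modn_small //; lia. Qed.

Lemma asucc_inj A i i' : i < alen A -> i' < alen A -> asucc A i = asucc A i' -> i = i'.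
Proof.
case: A => [a|s|s] /= h h'; try by case.
rewrite !modS //; do 2 case: eqP; lia.
Qed.

Lemma nextb_succ A bj i : is_chain_or_loop A -> asucc A i < alen A ->
  nextb A bj i = bj (asucc A i).
Proof. by case: A => //= s _ h; rewrite h. Qed.

Lemma expo_ge2 A i : wf_atom A -> is_chain_or_loop A -> i < alen A -> 2 <= expo A i.
Proof.
case: A => //= s [_ hall] _ hi; exact: (allP hall) _ (mem_nth 0 hi).
Qed.

Lemma mn_bound A r1 r2 i : std_basis A r1 -> std_basis A r2 -> is_chain_or_loop A ->
  i < alen A -> 2 <= expo A i -> r1 i + r2 i + 2 <= 2 * expo A i.
Proof.
case: A => //= s.
- move=> [h1 _] [h2 _] _ hi ha; have := h1 i hi; have := h2 i hi; lia.
- move=> h1 h2 _ hi ha; have := h1 i hi; have := h2 i hi; lia.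
Qed.

Unset Implicit Arguments. Set Strict Implicit.

Theorem lemma6p3 (W : seq atom) (l m n : nat -> nat -> nat)
    (b : nat -> nat -> rat) (K : nat -> nat -> int) :
  (forall j, j < size W -> wf_atom (nth atom_default W j)) ->
  type_Xm1 W l m n b K ->
  forall (j : nat) (S : seq nat),
    j < size W ->
    uniq S ->
    (forall i, i \in S -> loop_index (nth atom_default W j) (b j) (vvec l m n j) i) ->
    NP_rule (nth atom_default W j) (K j) S ->
    let KS := (\sum_(i <- S) K j i)%R in
    [/\ (0 <= KS)%R,
        KS = 0%R ->
          exists Bs : seq (seq nat),
            perm_eq (flatten Bs) S /\
            (forall B, B \in Bs -> zero_block (nth atom_default W j) (K j) B) &
        KS = 1%R ->
          exists (B0 : seq nat) (Bs : seq (seq nat)),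
            perm_eq (B0 ++ flatten Bs) S /\
            one_block (nth atom_default W j) (K j) B0 /\
            (forall B, B \in Bs -> zero_block (nth atom_default W j) (K j) B)].
Proof.
move=> wfW [_ [hm [hn [hE [hK _]]]]] j S jW uS hL hNP KS.
have wfA := wfW j jW.
set A := nth atom_default W j in wfA hL hNP *.
set k := K j in hNP *.
have HQ : forall i, i \in S -> (k i < 0)%R ->
    [/\ asucc A i \in S, Qd k (asucc A) (expo A) i & (0 < k (asucc A i))%R].
  move=> i iS ineg.
  have fS := hNP i iS ineg.
  have [cl [ilt _]] := hL i iS.
  have [_ [flt _]] := hL _ fS.
  have ha := expo_ge2 wfA cl ilt.
  have Qi : Qd k (asucc A) (expo A) i.
    split => //.
    apply: (Ar.arith (li := l j i) (lf := l j (asucc A i)) (mi := m j i) (ni := n j i)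
              (bi := b j i) (bf := b j (asucc A i))) => //.
    + exact: mn_bound (hm j jW) (hn j jW) cl ilt ha.
    + by rewrite -(nextb_succ (b j) cl flt); exact: hE.
    + exact: hK.
    + exact: hK.
  split => //.
  case: Qi => _; move: ineg; rewrite /k; set x := K j i; set y := K j (asucc A i).
  have : (2 <= Posz (expo A i))%R by lia.
  clearbody x y; move=> *; nia.
have Hinj : forall i i', i \in S -> i' \in S -> (k i < 0)%R -> (k i' < 0)%R ->
    asucc A i = asucc A i' -> i = i'.
  move=> i i' iS i'S _ _; apply: asucc_inj.
  - by case: (hL i iS) => _ [].
  - by case: (hL i' i'S) => _ [].
have [Bs [pB hB]] := decomp uS HQ Hinj.
have eKS : KS = (\sum_(B <- Bs) \sum_(i <- B) k i)%R.
  by rewrite /KS -(perm_big _ pB) big_flatten.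
have hge : forall B, B \in Bs -> (0 <= \sum_(i <- B) k i)%R.
  by move=> B /hB; apply: blk_ge0.
split.
- by rewrite eKS; apply: sum_ge0s.
- rewrite eKS => e; exists Bs; split => // B hB'.
  apply: blk0; first exact: hB.
  exact: (sum0s hge e).
- rewrite eKS => e.
  have [Bs1 [B0 [Bs2 [eB [h0 h1]]]]] := sum1s hge e.
  exists B0, (Bs1 ++ Bs2); split; last split.
  + apply: perm_trans pB; rewrite eB !flatten_cat /= perm_catCA.
    by rewrite perm_refl.
  + by apply: blk1 => //; apply: hB; rewrite eB mem_cat inE eqxx orbT.
  + move=> B hB'; apply: blk0; last exact: h1.
    by apply: hB; move: hB'; rewrite eB !mem_cat inE => /orP[->|->] //; rewrite !orbT.
Qed.
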